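(* When the characteristic functions range over $V_{\ge3}$, the competitive ratio of any individually rational (non-wasteful, possibly non-irrevocable) distribution policy cannot exceed $\frac{3\mathsf{min}}{\mathsf{max}}$, whether players act as greedy players or as pessimistic greedy players.
   Context: Players: a finite set $N=\{a_1,\dots,a_n\}$. A characteristic function is $v:2^N\to\mathbb{R}_{\ge 0}$ with $v(\emptyset)=0$. There are fixed, known constants $0<\mathsf{min}\le\mathsf{max}$ and every $v$ considered is monotone and bounded: $\mathsf{min}\le v(S)\le v(T)\le\mathsf{max}$ for all nonempty $S\subseteq T\subseteq N$. For an integer $\delta\ge1$, $V_\delta$ is the set of such $v$ with $\delta\cdot\mathsf{min}\le\mathsf{max}<(\delta+1)\cdot\mathsf{min}$; $V_{\ge3}=\bigcup_{\delta\ge3}V_\delta$. A coalition structure is a partition $C$ of $N$; $\mathsf{SW}(C\mid v)=\sum_{S\in C}v(S)$. Online process: an arrival order is a permutation $\pi=(\pi_1,\dots,\pi_n)$ of $N$; player $\pi_t$ arrives at time $t$. For $S\subseteq N$, $\pi_{|S}$ denotes the players of $S$ in the relative order of $\pi$. Let $C^{t-1}$ be the coalition structure of players arrived before time $t$ ($C^0=\emptyset$). At time $t$, player $\pi_t$ either joins an existing coalition $S\in C^{t-1}$ or forms $\{\pi_t\}$ (choice $S=\emptyset$); decisions are never revised. A distribution policy $\varphi$ assigns to every coalition $S$ with order $\pi_{|S}$ a vector $(\varphi_i(S,\pi_{|S}))_{i\in S}$ with $\sum_{i\in S}\varphi_i=v(S)$. In general (non-irrevocable) policies each share is split as $\varphi_i=\bar\varphi_i+\tilde\varphi_i$,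 where $\bar\varphi_i$ is paid out irrevocably (never reduced later) and $\tilde\varphi_i$ is promised but held in a bank for the coalition and may be redistributed (increased or decreased) when new players join; if nobody joins, $\tilde\varphi_i$ is paid out. Greedy players: $\pi_t$ chooses $S\in C^{t-1}\cup\{\emptyset\}$ maximizing $\varphi_{\pi_t}(S\cup\{\pi_t\},\pi_{|S\cup\{\pi_t\}})$. Pessimistic greedy players instead maximize $\bar\varphi_{\pi_t}(S\cup\{\pi_t\},\pi_{|S\cup\{\pi_t\}})$. Ties are broken by a predetermined rule. $C_g^t$ denotes the structure after time $t$ and $C_g=C_g^n$. Individual rationality: for every $v$ (and $\pi$), every $t\le n$, every $S\in C_g^t$ and every $i\in S$, $\varphi_i(S)\ge v(\{i\})$. The competitive ratio over a class is $\alpha=\inf_{v,\pi}\mathsf{SW}(C_g(v,\pi\mid\varphi))/\max_C\mathsf{SW}(C\mid v)$, over $v$ in the class and all arrival orders $\pi$. *)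

(* Defs.v *)
From HB Require Import structures.
From mathcomp Require Import boolp classical_sets reals.
From mathcomp Require Import all_boot all_order all_algebra all_fingroup.

Set Implicit Arguments.
Unset Strict Implicit.
Unset Printing Implicit Defensive.

Import Order.TTheory GRing.Theory Num.Theory.
Local Open Scope ring_scope.

Section OnlineCoalitions.
Variable R : realType.

Definition game (n : nat) := {set 'I_n} -> R.

Definition bounded_monotone (mn mx : R) (n : nat) (v : game n) : Prop :=
  v set0 = 0 /\
  forall S T : {set 'I_n}, S != set0 -> S \subset T ->
    [/\ mn <= v S, v S <= v T & v T <= mx].

Definition in_V (d : nat) (mn mx : R) (n : nat) (v : game n) : Prop :=
  bounded_monotone mn mx v /\ d%:R * mn <= mx /\ mx < d.+1%:R * mn.

Definition in_V_ge3 (mn mx : R) (n : nat) (v : game n) : Prop :=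
  exists d : nat, (3 <= d)%N /\ in_V d mn mx v.

Definition arrival (n : nat) (pi : {perm 'I_n}) : seq 'I_n :=
  map pi (enum 'I_n).

Definition restr (n : nat) (pi : {perm 'I_n}) (S : {set 'I_n}) : seq 'I_n :=
  [seq x <- arrival pi | x \in S].

(* A general (possibly non-irrevocable) distribution policy: for every player
   set, characteristic function, coalition S and order pi_{|S}, the
   irrevocably paid part [pay] (bar phi) and the banked part [bank]
   (tilde phi) of each player's share. *)
Record policy := Policy {
  pay  : forall n : nat, game n -> {set 'I_n} -> seq 'I_n -> 'I_n -> R;
  bank : forall n : nat, game n -> {set 'I_n} -> seq 'I_n -> 'I_n -> R }.

Definition share (phi : policy) (n : nat) (v : game n) (S : {set 'I_n})
  (o : seq 'I_n) (i : 'I_n) : R :=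
  pay phi v S o i + bank phi v S o i.

Definition gclass := forall n : nat, game n -> Prop.

Definition V_ge3 (mn mx : R) : gclass := fun n v => in_V_ge3 mn mx v.

Definition non_wasteful (phi : policy) (K : gclass) : Prop :=
  forall n (v : game n) (pi : {perm 'I_n}) (S : {set 'I_n}),
    K n v -> S != set0 ->
    \sum_(i in S) share phi v S (restr pi S) i = v S.

Definition irrevocable_pay (phi : policy) (K : gclass) : Prop :=
  forall n (v : game n) (pi : {perm 'I_n}) (S : {set 'I_n}) (j : 'I_n),
    K n v -> S != set0 -> j \notin S ->
    (forall i, i \in S -> index i (arrival pi) < index j (arrival pi))%N ->
    forall i, i \in S ->
      pay phi v S (restr pi S) i <= pay phi v (j |: S) (restr pi (j |: S)) i.

(* A predetermined tie-breaking rule: selects one option among the set of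
   maximizing options (set0 encodes "form a new singleton coalition"). *)
Definition tiebreak :=
  forall n : nat, game n -> {perm 'I_n} -> {set {set 'I_n}} -> {set 'I_n}.

Definition valid_tiebreak (tb : tiebreak) : Prop :=
  forall n (v : game n) (pi : {perm 'I_n}) (M : {set {set 'I_n}}),
    M != set0 -> tb n v pi M \in M.

(* Utility a player maximizes: phi (greedy) or bar phi (pessimistic). *)
Definition utility (phi : policy) (pess : bool) (n : nat) (v : game n)
  (pi : {perm 'I_n}) (S : {set 'I_n}) (i : 'I_n) : R :=
  if pess then pay phi v S (restr pi S) i else share phi v S (restr pi S) i.

Definition gstep (phi : policy) (pess : bool) (tb : tiebreak) (n : nat)
  (v : game n) (pi : {perm 'I_n}) (C : {set {set 'I_n}}) (p : 'I_n)
  : {set {set 'I_n}} :=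
  let opts := set0 |: C in
  let val := fun S : {set 'I_n} => utility phi pess v pi (p |: S) p in
  let M := [set S in opts | [forall S' in opts, val S' <= val S]] in
  let S := tb n v pi M in
  (C :\ S) :|: [set p |: S].

Definition gstruct (phi : policy) (pess : bool) (tb : tiebreak) (n : nat)
  (v : game n) (pi : {perm 'I_n}) (k : nat) : {set {set 'I_n}} :=
  foldl (gstep phi pess tb v pi) set0 (take k (arrival pi)).

Definition indiv_rational (phi : policy) (pess : bool) (tb : tiebreak)
  (K : gclass) : Prop :=
  forall n (v : game n) (pi : {perm 'I_n}) (k : nat) (S : {set 'I_n}) (i : 'I_n),
    K n v -> (k <= n)%N -> S \in gstruct phi pess tb v pi k -> i \in S ->
    v [set i] <= share phi v S (restr pi S) i.

Definition SW (n : nat) (C : {set {set 'I_n}}) (v : game n) : R :=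
  \sum_(S in C) v S.

Definition OPT (n : nat) (v : game n) : R :=
  \big[Num.max/0]_(P : {set {set 'I_n}} | partition P [set: 'I_n]) SW P v.

Definition ratio (phi : policy) (pess : bool) (tb : tiebreak) (n : nat)
  (v : game n) (pi : {perm 'I_n}) : R :=
  SW (gstruct phi pess tb v pi n) v / OPT v.

Definition comp_ratio (phi : policy) (pess : bool) (tb : tiebreak)
  (K : gclass) : R :=
  inf [set r : R | exists n (v : game n) (pi : {perm 'I_n}),
        [/\ (0 < n)%N, K n v & r = ratio phi pess tb v pi]].

End OnlineCoalitions.

(* Main.v *)
Require Import Defs.
From HB Require Import structures.
From mathcomp Require Import boolp classical_sets reals.
From mathcomp Require Import all_boot all_order all_algebra all_fingroup.
From mathcomp Require Import lra.
Import Order.TTheory GRing.Theory Num.Theory.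
Local Open Scope ring_scope.

Lemma gstep_form (R : realType) (phi : policy R) pess tb n (v : game R n) pi
  (C : {set {set 'I_n}}) p : valid_tiebreak tb ->
  exists2 S, S \in set0 |: C & gstep phi pess tb v pi C p = (C :\ S) :|: [set p |: S].
Proof.
move=> vtb; rewrite /gstep.
set opts := set0 |: C.
set val := fun S : {set 'I_n} => utility phi pess v pi (p |: S) p.
set M := [set S in opts | _].
have o0 : set0 \in opts by rewrite !inE eqxx.
have : M != set0.
  case: (@arg_maxP _ R _ set0 (mem opts) val o0) => S SO Smax.
  apply/set0Pn; exists S; rewrite inE; apply/andP; split; first exact: SO.
  apply/forall_inP => S' S'O.
  exact: Smax.
move/(vtb n v pi); rewrite inE => /andP[SO _].
by eexists; first exact: SO.
Qed.

Theorem theorem7 (R : realType) (mn mx : R) (phi : policy R)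
  (tb : tiebreak R) (pess : bool) :
  0 < mn -> mn <= mx -> 3%:R * mn <= mx ->
  non_wasteful phi (V_ge3 mn mx) ->
  irrevocable_pay phi (V_ge3 mn mx) ->
  valid_tiebreak tb ->
  indiv_rational phi pess tb (V_ge3 mn mx) ->
  comp_ratio phi pess tb (V_ge3 mn mx) <= 3%:R * mn / mx.
Proof.
move=> mn0 mnmx mx3 nw _ vtb ir.
pose v : game R 3 := fun S => if S == setT then mx else if S == set0 then 0 else mn.
have mx0 : 0 < mx by apply: lt_le_trans mnmx.
have T0 : (set0 : {set 'I_3}) != setT by apply/eqP => /setP/(_ ord0); rewrite !inE.
have vmid : forall S : {set 'I_3}, S != set0 -> S != setT -> v S = mn.
  by move=> S /negbTE h1 /negbTE h2; rewrite /v h1 h2.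
have Kv : V_ge3 mn mx v.
  exists (Num.truncn (mx / mn)).
  have hq : 0 <= mx / mn by apply: divr_ge0; apply: ltW.
  have /andP[h1 h2] := Num.Theory.truncn_itv hq.
  split; last split; last split.
  - have : 3%:R <= mx / mn by rewrite ler_pdivlMr.
    move=> h3; have : (3%:R : R) < (Num.truncn (mx / mn)).+1%:R by apply: le_lt_trans h2.
    by rewrite ltr_nat ltnS.
  - split; first by rewrite /v (negbTE T0) eqxx.
    move=> S T S0 ST.
    have T0' : T != set0 by apply: contraNneq S0 => TE; rewrite -subset0 -TE.
    have [ST'|nST] := eqVneq S setT.
      move: ST; rewrite ST' subTset => /eqP ->.
      by rewrite /v eqxx; split.
    rewrite vmid //.
    have [TT|nTT] := eqVneq T setT.
      by rewrite TT /v eqxx; split => //.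
    by rewrite vmid //; split.
  - by rewrite -ler_pdivlMr.
  - by rewrite -ltr_pdivrMr.
set pi : {perm 'I_3} := 1%g.
have [a0 [a1 [a2 [Ea un]]]] : exists a0 a1 a2, arrival pi = [:: a0; a1; a2] /\ uniq [:: a0; a1; a2].
  have sz : size (arrival pi) = 3 by rewrite size_map size_enum_ord.
  have un : uniq (arrival pi) by rewrite map_inj_uniq ?enum_uniq //; exact: perm_inj.
  move: sz un; case: (arrival pi) => [|b0 [|b1 [|b2 [|]]]] //= _ un.
  by exists b0, b1, b2.
pose C k := gstruct phi pess tb v pi k.
have no2 : forall k x y, (k <= 3)%N -> x != y -> [set x; y] \in C k -> False.
  move=> k x y k3 xy Hin.
  have hx := ir 3 v pi k _ x Kv k3 Hin (set21 x y).
  have hy := ir 3 v pi k _ y Kv k3 Hin (set22 x y).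
  have ne : [set x; y] != set0 by apply/set0Pn; exists x; exact: set21.
  have := nw 3 v pi [set x; y] Kv ne.
  have xny : x \notin [set y] by rewrite inE.
  rewrite big_setU1 //= big_set1.
  have nT : [set x; y] != setT by apply/eqP => E; move: (cards2 x y); rewrite E cardsT card_ord xy.
  have s1 : forall z : 'I_3, [set z] != set0 by move=> z; apply/set0Pn; exists z; rewrite inE.
  have t1 : forall z : 'I_3, [set z] != setT by move=> z; apply/eqP => E; move: (cards1 z); rewrite E cardsT card_ord.
  rewrite (vmid [set x]) // in hx; rewrite (vmid [set y]) // in hy.
  rewrite (vmid _ ne nT) => E; lra.
have step : forall k (C0 : {set {set 'I_3}}) p (A : {set 'I_3}), (k <= 3)%N ->
    C k = gstep phi pess tb v pi C0 p ->
    (forall X, X \in C0 -> exists2 x, x \in A & X = [set x]) -> p \notin A ->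
    forall X, X \in C k -> exists2 x, x \in p |: A & X = [set x].
  move=> k C0 p A k3 Ek HC0 pA.
  have [S SC Eg] := @gstep_form R phi pess tb 3 v pi C0 p vtb.
  case S0: (S == set0).
    move/eqP: S0 Eg => -> Eg X; rewrite Ek Eg !inE => /orP[/andP[_ XC0] | /eqP ->].
      by have [x xA ->] := HC0 X XC0; exists x => //; rewrite !inE xA orbT.
    by exists p; [rewrite !inE eqxx | rewrite setU0].
  exfalso; move: SC; rewrite !inE S0 /= => /HC0 [x xA SE].
  apply: (no2 k p x k3); first by apply: contraNneq pA => ->.
  by rewrite Ek Eg SE !inE eqxx orbT.
have E1 : C 1 = gstep phi pess tb v pi set0 a0 by rewrite /C /gstruct Ea.
have E2 : C 2 = gstep phi pess tb v pi (C 1) a1 by rewrite /C /gstruct Ea.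
have E3 : C 3 = gstep phi pess tb v pi (C 2) a2 by rewrite /C /gstruct Ea.
move: un; rewrite /= !inE !negb_or => /andP[/andP[n01 n02] /andP[n12 _]].
have H1 := step 1 set0 a0 set0 isT E1 (fun X (h : X \in set0) => ltac:(by rewrite inE in h)) ltac:(by rewrite inE).
have H2 := step 2 _ a1 _ isT E2 H1 ltac:(by rewrite !inE orbF eq_sym).
have H3 := step 3 _ a2 _ isT E3 H2 ltac:(by rewrite !inE orbF negb_or ![a2 == _]eq_sym n12 n02).
have s1 : forall z : 'I_3, [set z] != set0 by move=> z; apply/set0Pn; exists z; rewrite inE.
have t1 : forall z : 'I_3, [set z] != setT by move=> z; apply/eqP => E; move: (cards1 z); rewrite E cardsT card_ord.
have SWle : SW (C 3) v <= 3%:R * mn.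
  rewrite /SW (eq_bigr (fun _ => mn)); last first.
    by move=> X /H3 [x _ ->]; rewrite vmid.
  rewrite sumr_const mulr_natl ler_pMn2l //.
  have sub : C 3 \subset [set [set x] | x in [set: 'I_3]].
    by apply/subsetP => X /H3 [x _ ->]; apply/imsetP; exists x; rewrite ?inE.
  apply: (leq_trans (subset_leq_card sub)).
  by apply: (leq_trans (leq_imset_card _ _)); rewrite cardsT card_ord.
have SW0 : 0 <= SW (C 3) v.
  rewrite /SW sumr_ge0 // => X /H3 [x _ ->]; rewrite vmid //; exact: ltW.
have OPTge : mx <= OPT v.
  have hp : partition [set [set: 'I_3]] [set: 'I_3].
    rewrite /partition cover1 eqxx trivIset1 /= inE; exact: T0.
  apply: le_trans (le_bigmax_cond _ (fun P => SW P v) hp).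
  by rewrite /SW big_set1 /v eqxx.
have OPT0 : 0 < OPT v by apply: lt_le_trans OPTge.
have rle : Defs.ratio phi pess tb v pi <= 3%:R * mn / mx.
  rewrite /Defs.ratio -/(C 3) ler_pdivrMr //.
  apply: (le_trans SWle).
  rewrite -{1}(divfK (lt0r_neq0 mx0) (3%:R * mn)).
  apply: ler_wpM2l => //.
  by apply: divr_ge0; [apply: mulr_ge0; [by [] | exact: ltW] | exact: ltW].
rewrite /comp_ratio; set E := (X in inf X).
have Ein : E (Defs.ratio phi pess tb v pi).
  by exists 3%N, v, pi; split.
case: (pselect (has_lbound E)) => [hl|nhl].
  exact: le_trans (ge_inf hl Ein) rle.
rewrite inf_out; last by case=> _ h; exact: nhl.
by apply: divr_ge0; [apply: mulr_ge0; [by [] | exact: ltW] | exact: ltW].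
Qed.
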